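(* Let $R$ be a commutative Noetherian ring with unity such that the number of vertices of $\Gamma_E(R)$ is finite and greater than $2$. Then for any vertex $[y]$ of maximal degree in $\Gamma_E(R)$, $\operatorname{ann}(y)$ is a maximal element of $\mathfrak F=\{\operatorname{ann}(z)\mid 0\neq z\in R\}$, and hence is an associated prime of $R$.
   Context: For $x,y\in R$ write $x\sim y$ iff $\operatorname{ann}(x)=\operatorname{ann}(y)$; $[x]$ denotes the equivalence class of $x$. Let $Z^*(R)$ be the set of nonzero zero divisors of $R$. The graph $\Gamma_E(R)$ is the simple graph whose vertices are the classes $[x]$ with $x\in Z^*(R)$, two distinct vertices $[x],[y]$ being adjacent iff $xy=0$. The degree of a vertex is the number of vertices adjacent to it. An associated prime of $R$ is a prime ideal of the form $\operatorname{ann}(y)$, $y\in R$. *)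

(* Defs.v *)
From mathcomp Require Import all_boot all_order all_algebra.
From mathcomp Require Import boolp.
Set Implicit Arguments. Unset Strict Implicit. Unset Printing Implicit Defensive.
Import GRing.Theory.
Local Open Scope ring_scope.

Section Defs.
Variable R : comNzRingType.

Definition is_ideal (I : R -> Prop) : Prop :=
  [/\ I 0, (forall x y, I x -> I y -> I (x + y)) & (forall r x, I x -> I (r * x))].

Definition noetherian : Prop :=
  forall I : nat -> R -> Prop,
    (forall n, is_ideal (I n)) ->
    (forall n x, I n x -> I n.+1 x) ->
    exists N, forall n, (N <= n)%N -> forall x, I n x <-> I N x.

Definition prime_ideal (P : R -> Prop) : Prop :=
  [/\ is_ideal P, ~ P 1 & forall a b, P (a * b) -> P a \/ P b].

Definition ann (x : R) : R -> Prop := fun r => r * x = 0.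

Definition ann_equiv (x y : R) : Prop := forall r, ann x r <-> ann y r.

Definition nz_zdiv (x : R) : Prop := x != 0 /\ exists z : R, z != 0 /\ x * z = 0.

(* s is a list of representatives of the vertices of Gamma_E(R):
   one element of Z^*(R) for each class [x], x in Z^*(R). *)
Definition vertex_reps (s : seq R) : Prop :=
  [/\ uniq s,
      (forall x, x \in s -> nz_zdiv x),
      (forall z, nz_zdiv z -> exists2 x, x \in s & ann_equiv z x) &
      (forall x y, x \in s -> y \in s -> ann_equiv x y -> x = y)].

Definition vdeg (s : seq R) (y : R) : nat :=
  count (fun x => `[< ~ ann_equiv x y >] && (x * y == 0)) s.

Definition maximal_in_F (y : R) : Prop :=
  y != 0 /\ forall z : R, z != 0 -> (forall r, ann y r -> ann z r) ->
                          (forall r, ann z r -> ann y r).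

Definition associated_prime (P : R -> Prop) : Prop :=
  prime_ideal P /\ exists w : R, forall r, P r <-> ann w r.

End Defs.

(* Main.v *)
Require Import Defs.
From mathcomp Require Import all_boot all_order all_algebra.
From mathcomp Require Import boolp.
From mathcomp Require Import zify.
Set Implicit Arguments. Unset Strict Implicit. Unset Printing Implicit Defensive.
Import GRing.Theory.
Local Open Scope ring_scope.

Section Main.
Variable R : comNzRingType.
Variable s : seq R.
Hypothesis hs : vertex_reps s.
Hypothesis h2 : (2 < size s)%N.
Variable y : R.
Hypothesis hy : nz_zdiv y.
Hypothesis hmax : forall z : R, nz_zdiv z -> (vdeg s z <= vdeg s y)%N.

Definition A (x : R) : nat := count (fun r => r * x == 0) s.

Lemma count_split (P Q : pred R) (l : seq R) :
  count Q l = (count (fun r => P r && Q r) l + count (fun r => ~~ P r && Q r) l)%N.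
Proof. elim: l => //= a l ->; case: (P a); case: (Q a) => /=; lia. Qed.

Lemma equiv_sym (a b : R) : ann_equiv a b -> ann_equiv b a.
Proof. move=> h r; split => H; [exact: (proj2 (h r) H) | exact: (proj1 (h r) H)]. Qed.

Lemma equiv_trans (a b c : R) : ann_equiv a b -> ann_equiv b c -> ann_equiv a c.
Proof.
move=> h1 h2' r; split => H.
- exact: (proj1 (h2' r) (proj1 (h1 r) H)).
- exact: (proj2 (h1 r) (proj2 (h2' r) H)).
Qed.

Lemma equiv_mul (t r w : R) : ann_equiv t r -> (t * w == 0) = (r * w == 0).
Proof.
move=> h; rewrite [t * w]mulrC [r * w]mulrC.
apply/eqP/eqP => H; [exact: (proj1 (h w) H) | exact: (proj2 (h w) H)].
Qed.

Lemma rep_ex (t : R) : nz_zdiv t -> exists2 r, r \in s & ann_equiv t r.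
Proof. by case: hs => _ _ hex _; apply: hex. Qed.

Lemma degA (x : R) : nz_zdiv x -> (vdeg s x + (x * x == 0)%R = A x)%N.
Proof.
move=> hx; case: (hs) => hu _ _ huq.
have [r0 r0s e0] := rep_ex hx.
rewrite /A (count_split (fun r => `[< ann_equiv r x >]) (fun r => r * x == 0)) [RHS]addnC.
congr (_ + _)%N.
- rewrite /vdeg; apply: eq_count => r /=; by rewrite asbool_neg.
- symmetry; transitivity (count (fun r => (r == r0) && (r0 * x == 0)) s); last first.
    rewrite -(equiv_mul x e0); case: (x * x == 0).
      rewrite (eq_count (a2 := pred1 r0)); last by move=> r /=; rewrite andbT.
      by rewrite count_uniq_mem // r0s.
    rewrite (eq_count (a2 := pred0)); last by move=> r /=; rewrite andbF.
    by rewrite count_pred0.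
  apply: eq_in_count => r rs /=.
  have -> : `[< ann_equiv r x >] = (r == r0).
    apply/asboolP/eqP => [h|->]; first exact: huq (equiv_trans h e0).
    exact: equiv_sym e0.
  by case: eqP => // ->.
Qed.

Definition ex (w v : R) : pred R := fun r => (r * w == 0) && (r * v != 0).

Lemma A_split (v w : R) : (forall r, r * v = 0 -> r * w = 0) ->
  A w = (A v + count (ex w v) s)%N.
Proof.
move=> h; rewrite /A (count_split (fun r => r * v == 0) (fun r => r * w == 0)).
congr (_ + _)%N; apply: eq_count => r; rewrite /ex /=.
- case hv: (r * v == 0) => //=; move/eqP: hv => /h ->; by rewrite eqxx.
- by rewrite andbC.
Qed.

Lemma count_ge1 (P : pred R) r : r \in s -> P r -> (0 < count P s)%N.
Proof. by move=> rs pr; rewrite -has_count; apply/hasP; exists r. Qed.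

Lemma count_ge2 (P : pred R) r1 r2 : r1 \in s -> r2 \in s -> r1 != r2 ->
  P r1 -> P r2 -> (1 < count P s)%N.
Proof.
move=> r1s r2s ne p1 p2; case: (hs) => hu _ _ _.
rewrite -size_filter.
have: (size [:: r1; r2] <= size (filter P s))%N.
  apply: uniq_leq_size; first by rewrite /= inE andbT ne.
  move=> x; rewrite !inE => /orP[] /eqP ->; by rewrite mem_filter ?p1 ?p2.
by [].
Qed.

Lemma incl_nz (w : R) : w != 0 -> (forall r, r * y = 0 -> r * w = 0) -> nz_zdiv w.
Proof.
move=> wn h; split=> //; case: hy => _ [z [zn yz]]; exists z; split=> //.
rewrite mulrC; apply: h; by rewrite mulrC.
Qed.

Lemma nz_of (t w : R) : t != 0 -> w != 0 -> t * w = 0 -> nz_zdiv t.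
Proof. by move=> tn wn tw; split=> //; exists w. Qed.

Lemma K0 (w t : R) : w != 0 -> (forall r, r * y = 0 -> r * w = 0) ->
  t != 0 -> t * w = 0 -> t * y != 0 ->
  [/\ A w = (A y).+1, w * w = 0 & y * y != 0].
Proof.
move=> wn h tn tw ty.
have hw := incl_nz wn h.
have [rt rts et] := rep_ex (nz_of tn wn tw).
have c1 : (0 < count (ex w y) s)%N.
  apply: (count_ge1 rts) => /=; rewrite /ex -(equiv_mul w et) -(equiv_mul y et) ty andbT.
  exact/eqP.
have Ae := A_split h.
have d1 := degA hw; have d2 := degA hy; have m := hmax hw.
have H : (w * w == 0) && ~~ (y * y == 0).
  move: d1 d2; case: (w * w == 0); case: (y * y == 0) => /= d1 d2 //; exfalso; lia.
case/andP: H => /eqP ww yy; split=> //.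
move: d1 d2; rewrite ww eqxx /=; case: (y * y == 0) yy => // _ d1 d2; lia.
Qed.

Lemma K3 (w t1 t2 : R) : w != 0 -> (forall r, r * y = 0 -> r * w = 0) ->
  t1 != 0 -> t1 * w = 0 -> t1 * y != 0 ->
  t2 != 0 -> t2 * w = 0 -> t2 * y != 0 -> ann_equiv t1 t2.
Proof.
move=> wn h t1n t1w t1y t2n t2w t2y.
case: (pselect (ann_equiv t1 t2)) => // ne; exfalso.
have [Aw _ _] := K0 wn h t1n t1w t1y.
have [r1 r1s e1] := rep_ex (nz_of t1n wn t1w).
have [r2 r2s e2] := rep_ex (nz_of t2n wn t2w).
have rne : r1 != r2.
  apply/eqP => er; apply: ne; apply: equiv_trans e1 _; rewrite er; exact: equiv_sym.
have c2 : (1 < count (ex w y) s)%N.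
  apply: (count_ge2 r1s r2s rne) => /=.
    by rewrite /ex -(equiv_mul w e1) -(equiv_mul y e1) t1y andbT; apply/eqP.
  by rewrite /ex -(equiv_mul w e2) -(equiv_mul y e2) t2y andbT; apply/eqP.
have := A_split h; lia.
Qed.

Lemma K4 (w t w' u : R) : w != 0 -> (forall r, r * y = 0 -> r * w = 0) ->
  t != 0 -> t * w = 0 -> t * y != 0 ->
  w' != 0 -> (forall r, r * w = 0 -> r * w' = 0) ->
  u != 0 -> u * w' = 0 -> u * w != 0 -> False.
Proof.
move=> wn h tn tw ty w'n h' un uw' uw.
have h2' : forall r, r * y = 0 -> r * w' = 0 by move=> r /h /h'.
have uy : u * y != 0 by apply: contra uw => /eqP /h /eqP.
have [Aw _ _] := K0 wn h tn tw ty.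
have [Aw' _ _] := K0 w'n h2' un uw' uy.
have [ru rus eu] := rep_ex (nz_of un w'n uw').
have c1 : (0 < count (ex w' w) s)%N.
  apply: (count_ge1 rus) => /=.
  by rewrite /ex -(equiv_mul w' eu) -(equiv_mul w eu) uw andbT; apply/eqP.
have := A_split h'; lia.
Qed.

Lemma ymax : maximal_in_F y.
Proof.
case: (hy) => yn [z0 [z0n yz0]].
case: (hs) => hu hnz _ huq.
split=> // z zn hz r rz.
case: (eqVneq (r * y) 0) => // ry; exfalso.
have rn : r != 0 by apply: contraNneq ry => ->; rewrite mul0r.
have [_ zz yy] := K0 zn hz rn rz ry.
have z0y : z0 * y = 0 by rewrite mulrC.
have z0z : z0 * z = 0 := hz z0 z0y.
case: (eqVneq (z * y) 0) => zy; last first.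
  have e : ann_equiv z (z + z0).
    apply: (K3 zn hz zn zz zy).
    - apply/eqP => e0; move/eqP: zy; apply.
      by have := congr1 (fun q => q * y) e0; rewrite /= mulrDl z0y addr0 mul0r.
    - by rewrite mulrDl zz z0z addr0.
    - by rewrite mulrDl z0y addr0.
  apply: (K4 zn hz rn rz ry z0n _ yn yz0); last by rewrite mulrC.
  move=> q qz.
  have := proj1 (e q) qz; rewrite /ann mulrDr qz add0r //.
have yz : y * z = 0 by rewrite mulrC.
have fi : forall t, t != 0 -> t * z = 0 -> t * y != 0 -> ann_equiv t y.
  by move=> t tn tz ty; apply: (K3 zn hz tn tz ty yn yz yy).
have fii : forall a q, a * y = 0 -> q * z = 0 -> q * a = 0.
  move=> a q ay qz.
  case: (eqVneq (q * y) 0) => qy.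
    have e : ann_equiv (y + q) y.
      apply: fi.
      - apply/eqP => e0; move/eqP: yy; apply.
        by have := congr1 (fun x => x * y) e0; rewrite /= mulrDl qy addr0 mul0r.
      - by rewrite mulrDl yz qz addr0.
      - by rewrite mulrDl qy addr0.
    have := proj2 (e a) ay; rewrite /ann mulrDr ay add0r mulrC //.
  have qn : q != 0 by apply: contraNneq qy => ->; rewrite mul0r.
  have e := fi q qn qz qy.
  by have := proj2 (e a) ay; rewrite /ann mulrC.
have fiii : forall a u, a != 0 -> a * y = 0 -> u * a = 0 -> u * z = 0.
  move=> a u an ay ua; case: (eqVneq (u * z) 0) => // uz; exfalso.
  have un : u != 0 by apply: contraNneq uz => ->; rewrite mul0r.
  exact: (K4 zn hz rn rz ry an (fun q => fii a q ay) un ua uz).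
have hzz : nz_zdiv z by apply: (incl_nz zn hz).
have [ry0 ry0s ey] := rep_ex hy.
have [rz0 rz0s ez] := rep_ex hzz.
have : ~~ all (mem [:: ry0; rz0]) s.
  apply/negP => /allP sub; have := uniq_leq_size hu sub; rewrite /=; lia.
case/allPn => x xs; rewrite !inE negb_or => /andP[xny xnz].
have [xn [b [bn xb]]] := hnz x xs.
have nxy : ~ ann_equiv x y.
  move=> e; move/eqP: xny; apply; apply: huq => //; exact: equiv_trans e ey.
have nxz : ~ ann_equiv x z.
  move=> e; move/eqP: xnz; apply; apply: huq => //; exact: equiv_trans e ez.
have xz : x * z != 0.
  apply/eqP => xz; case: (eqVneq (x * y) 0) => xy.
    apply: nxz => q; split => H.
      exact: (fiii x q xn xy H).
    exact: (fii x q xy H).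
  exact: nxy (fi x xn xz xy).
have xzy : x * z * y = 0 by rewrite -mulrA zy mulr0.
have bxz : b * (x * z) = 0 by rewrite mulrA (mulrC b) xb mul0r.
have bz : b * z = 0 := fiii (x * z) b xz xzy bxz.
case: (eqVneq (b * y) 0) => by'.
  have xb' : x * b = 0 by [].
  move/eqP: xz; apply; apply: (fiii b x bn by'); exact: xb'.
have e := fi b bn bz by'.
have xy : x * y = 0 := proj1 (e x) xb.
move/eqP: xz; apply; rewrite mulrC; exact: (fii x z xy zz).
Qed.

Lemma yprime : associated_prime (ann y).
Proof.
have [yn hm] := ymax.
split; last by exists y.
split.
- split; rewrite /ann.
  + by rewrite mul0r.
  + by move=> a b ha hb; rewrite mulrDl ha hb addr0.
  + by move=> r x hx; rewrite -mulrA hx mulr0.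
- by rewrite /ann mul1r; apply/eqP.
- move=> a b hab; case: (eqVneq (b * y) 0) => [h|byn]; [by right|left].
  apply: (hm (b * y) byn _ a).
    by move=> q hq; rewrite /ann mulrCA hq mulr0.
  by rewrite /ann mulrA.
Qed.

End Main.

Theorem theorem3p6 (R : comNzRingType) (hN : noetherian R)
    (s : seq R) (hs : vertex_reps s) (h2 : (2 < size s)%N)
    (y : R) (hy : nz_zdiv y)
    (hmax : forall z : R, nz_zdiv z -> (vdeg s z <= vdeg s y)%N) :
  maximal_in_F y /\ associated_prime (ann y).
Proof.
split; [exact: (ymax hs h2 hy hmax) | exact: (yprime hs h2 hy hmax)].
Qed.
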